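(* The consecutive patterns $110$ and $100$ are super-strongly Wilf equivalent.
   Context: An inversion sequence of length $n$ is an integer sequence $e=e_1\dots e_n$ with $0\le e_i<i$ for all $i$; $\mathbf{I}_n$ denotes the set of these. $\mathrm{Em}(110,e)$ is the set of $i$ with $e_i=e_{i+1}>e_{i+2}$, and $\mathrm{Em}(100,e)$ the set of $i$ with $e_i>e_{i+1}=e_{i+2}$. Two consecutive patterns $p,p'$ are super-strongly Wilf equivalent if $|\{e\in\mathbf{I}_n:\mathrm{Em}(p,e)=T\}|=|\{e\in\mathbf{I}_n:\mathrm{Em}(p',e)=T\}|$ for all $n$ and all $T\subseteq[n]$. *)

(* Defs.v *)
From mathcomp Require Import all_boot.
Set Implicit Arguments. Unset Strict Implicit. Unset Printing Implicit Defensive.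

(* Convention: position i (1-based, as in the paper) of a sequence of length n
   is represented by the 0-based index i-1 : 'I_n.  Entries are stored as
   naturals in an n.-tuple over 'I_n (any entry of an inversion sequence is < n). *)

Definition ent n (e : n.-tuple 'I_n) (j : nat) : nat := nth 0 (map val e) j.

Definition invseqs (n : nat) : {set n.-tuple 'I_n} :=
  [set e : n.-tuple 'I_n | [forall j : 'I_n, ent e j <= j]].

Definition Em110 n (e : n.-tuple 'I_n) : {set 'I_n} :=
  [set j : 'I_n | (j.+2 < n) && (ent e j == ent e j.+1) && (ent e j.+1 > ent e j.+2)].

Definition Em100 n (e : n.-tuple 'I_n) : {set 'I_n} :=
  [set j : 'I_n | (j.+2 < n) && (ent e j > ent e j.+1) && (ent e j.+1 == ent e j.+2)].

(* Main.v *)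
Require Import Defs.
From mathcomp Require Import all_boot zify.

Fixpoint allseqs (m : nat) : seq (seq nat) :=
  if m is k.+1 then [seq rcons s y | y <- iota 0 k.+1, s <- allseqs k] else [:: [::]].

Definition p110 (s : seq nat) j :=
  (j.+2 < size s) && (nth 0 s j == nth 0 s j.+1) && (nth 0 s j.+2 < nth 0 s j.+1).
Definition p100 (s : seq nat) j :=
  (j.+2 < size s) && (nth 0 s j.+1 < nth 0 s j) && (nth 0 s j.+1 == nth 0 s j.+2).
Definition good (p : seq nat -> nat -> bool) (T : nat -> bool) (s : seq nat) :=
  all (fun j => p s j == T j) (iota 0 (size s).-2).

Lemma allseqsS m : allseqs m.+1 = [seq rcons s y | y <- iota 0 m.+1, s <- allseqs m].
Proof. by []. Qed.

Lemma count_allseqsS P m :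
  count P (allseqs m.+1) = \sum_(y < m.+1) count (fun s : seq nat => P (rcons s (y : nat))) (allseqs m).
Proof.
rewrite allseqsS count_flatten -map_comp sumnE big_map.
have -> : iota 0 m.+1 = index_iota 0 m.+1 by rewrite /index_iota subn0.
by rewrite big_mkord; apply: eq_bigr => i _; rewrite /= count_map.
Qed.

Lemma sum_count_pick (A : Type) (L : seq A) k (P : A -> nat -> bool) (g : A -> nat) :
  \sum_(y < k) count (fun s => P s y && (g s == y)) L = count (fun s => P s (g s) && (g s < k)) L.
Proof.
elim: L => [|a L IH]; first by rewrite big1.
rewrite /= big_split /= IH; congr (_ + _).
case: (ltnP (g a) k) => H.
  rewrite (bigD1 (Ordinal H)) //= eqxx andbT big1 ?addn0 //.
  move=> i Hi; case: eqP => [E|]; last by rewrite andbF.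
  by case/eqP: Hi; apply/val_inj; rewrite /= E.
rewrite big1 ?(ltnNge (g a) k) ?H ?andbF // => i _.
by rewrite (gtn_eqF (leq_trans (ltn_ord i) H)) andbF.
Qed.

Lemma good_small p T s : size s <= 2 -> good p T s.
Proof. by rewrite /good; case: s => [|a [|b [|c s]]]. Qed.

Lemma p110_rcons s y j : j.+2 < size s -> p110 (rcons s y) j = p110 s j.
Proof.
move=> H; rewrite /p110 size_rcons !nth_rcons.
have -> : j < size s by lia.
have -> : j.+1 < size s by lia.
rewrite H; have -> : j.+2 < (size s).+1 by lia.
by [].
Qed.

Lemma p100_rcons s y j : j.+2 < size s -> p100 (rcons s y) j = p100 s j.
Proof.
move=> H; rewrite /p100 size_rcons !nth_rcons.
have -> : j < size s by lia.
have -> : j.+1 < size s by lia.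
rewrite H; have -> : j.+2 < (size s).+1 by lia.
by [].
Qed.

Lemma good_rcons p T s y (hp : forall j, j.+2 < size s -> p (rcons s y) j = p s j) :
  2 <= size s -> good p T (rcons s y) = good p T s && (p (rcons s y) (size s - 2) == T (size s - 2)).
Proof.
rewrite /good size_rcons; case Hs: (size s) hp => [|[|k]] // hp _.
have -> : k.+3.-2 = k + 1 by lia.
rewrite iotaD all_cat /= andbT add0n.
have -> : k.+2 - 2 = k by lia.
have -> : (k + 1).-1 = k by lia.
congr (_ && _); apply: eq_in_all => j; rewrite mem_iota => Hj.
rewrite hp //; lia.
Qed.

Lemma mem_allseqs m s :
  (s \in allseqs m) = (size s == m) && all (fun j => nth 0 s j <= j) (iota 0 m).
Proof.
elim: m s => [|m IH] s; first by case: s.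
rewrite allseqsS; apply/allpairsP/andP => [[[y s0] [Hy Hs0 ->]] | [/eqP Hsz Hall]].
  move: Hy Hs0; rewrite [(_,_).1]/= [(_,_).2]/= mem_iota => Hy Hs0.
  move: Hs0; rewrite IH => /andP[/eqP Hs0 Hall]; rewrite size_rcons Hs0; split => //.
  have -> : iota 0 m.+1 = iota 0 m ++ [:: m] by rewrite -addn1 iotaD.
  rewrite all_cat /= andbT; apply/andP; split.
    apply/allP => j; rewrite mem_iota add0n => /andP[_ Hj].
    rewrite nth_rcons Hs0 Hj; by apply: (allP Hall); rewrite mem_iota add0n Hj.
  by rewrite nth_rcons Hs0 ltnn eqxx; lia.
case/lastP: s Hsz Hall => [|s0 y] // Hsz Hall.
rewrite size_rcons in Hsz; case: Hsz => Hsz.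
exists (y, s0); split => //.
  rewrite [(_,_).1]/= mem_iota.
  have /(allP Hall) : m \in iota 0 m.+1 by rewrite mem_iota; lia.
  by rewrite nth_rcons Hsz ltnn eqxx => ?; lia.
rewrite [(_,_).2]/= IH Hsz eqxx /=; apply/allP => j; rewrite mem_iota add0n => /andP[_ Hj].
have /(allP Hall) : j \in iota 0 m.+1 by rewrite mem_iota; lia.
by rewrite nth_rcons Hsz Hj.
Qed.

Lemma size_allseqs m s : s \in allseqs m -> size s = m.
Proof. by rewrite mem_allseqs => /andP[/eqP]. Qed.

Lemma last_allseqs m s : s \in allseqs m -> last 0 s < m.+1.
Proof.
rewrite mem_allseqs => /andP[/eqP Hs Hall].
case: m Hs Hall => [|m] Hs Hall; first by case: s Hs Hall.
rewrite -nth_last Hs /=.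
have /(allP Hall) : m \in iota 0 m.+1 by rewrite mem_iota; lia. lia.
Qed.

Lemma p110_last s y : 2 <= size s ->
  p110 (rcons s y) (size s - 2) = (nth 0 s (size s - 2) == last 0 s) && (y < last 0 s).
Proof.
case Hs: (size s) => [|[|k]] // _.
have -> : k.+2 - 2 = k by lia.
rewrite /p110 size_rcons Hs !nth_rcons Hs -nth_last Hs /=.
have -> : k < k.+2 by lia.
have -> : k.+1 < k.+2 by lia.
have -> : k.+2 < k.+3 by lia.
by rewrite ltnn eqxx.
Qed.

Lemma p100_last s y : 2 <= size s ->
  p100 (rcons s y) (size s - 2) = (last 0 s < nth 0 s (size s - 2)) && (last 0 s == y).
Proof.
case Hs: (size s) => [|[|k]] // _.
have -> : k.+2 - 2 = k by lia.
rewrite /p100 size_rcons Hs !nth_rcons Hs -nth_last Hs /=.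
have -> : k < k.+2 by lia.
have -> : k.+1 < k.+2 by lia.
have -> : k.+2 < k.+3 by lia.
by rewrite ltnn eqxx.
Qed.

Lemma nth_rcons_last s y : 1 <= size s -> nth 0 (rcons s y) ((size s).+1 - 2) = last 0 s.
Proof.
case Hs: (size s) => [|k] // _.
rewrite nth_rcons Hs -nth_last Hs.
have -> : k.+2 - 2 = k by lia.
by have -> : k < k.+1 by lia.
Qed.

Lemma count_split (A : Type) (a b : A -> bool) L :
  count a L = count (fun s => a s && b s) L + count (fun s => a s && ~~ b s) L.
Proof. by elim: L => //= x L ->; case: (a x); case: (b x) => /=; lia. Qed.

Lemma count_const_l (A : Type) (P : A -> bool) c L :
  count (fun s => c && P s) L = c * count P L.
Proof. by case: c; rewrite ?mul1n ?mul0n //=; elim: L. Qed.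

Lemma sum_count_pick_in (A : eqType) (L : seq A) k (Q : A -> nat -> bool) (g : A -> nat) :
  (forall s y, s \in L -> Q s y -> g s = y) ->
  \sum_(y < k) count (fun s => Q s y) L = count (fun s => Q s (g s) && (g s < k)) L.
Proof.
move=> H; rewrite -sum_count_pick; apply: eq_bigr => y _.
apply: eq_in_count => s Hs /=.
by case E: (Q s y) => //=; rewrite (H _ _ Hs E) eqxx.
Qed.

Lemma sum_pick_rcons (L : seq (seq nat)) k (F : pred (seq nat)) (g : seq nat -> nat) :
  (forall s y, s \in L -> F (rcons s y) -> g s = y) ->
  \sum_(y < k) count (fun s : seq nat => F (rcons s (y : nat))) L =
  count (fun s => F (rcons s (g s)) && (g s < k)) L.
Proof. exact: (@sum_count_pick_in _ L k (fun s y => F (rcons s y)) g). Qed.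

Lemma pt100 m T x s : s \in allseqs m ->
  (good p100 T (rcons s x) && (1 < m.+1) && (last 0 (rcons s x) == x) &&
   (x < nth 0 (rcons s x) (m.+1 - 2))) && (x < m.+1) =
  ((1 < m.+1) && ((m < 2) || ~~ T (m - 2))) && (good p100 T s && (x < last 0 s)).
Proof.
move=> Hs; have Hsz := size_allseqs _ _ Hs; have Hl := last_allseqs _ _ Hs.
rewrite last_rcons eqxx andbT.
case: (posnP m) => Hm0; first by rewrite Hm0 /= !andbF.
rewrite -Hsz nth_rcons_last ?Hsz //.
have -> : 1 < m.+1 by lia.
have [Hm|Hm] := ltnP m 2.
  rewrite (good_small _ _ (rcons s x)) ?(good_small _ _ s) ?size_rcons ?Hsz; try lia. rewrite /= ?Hm.
rewrite good_rcons; [ | exact: p100_rcons | by rewrite Hsz ].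
rewrite p100_last Hsz ?(leqNgt 2 m) ?Hm //=.
case: (T (m-2)); case: (good p100 T s); case: (ltnP x (last 0 s)) => H /=;
  rewrite ?(gtn_eqF H) ?andbF ?andbT //=.
all: lia.
Qed.

Lemma pt110 m T x s : s \in allseqs m ->
  (good p110 T (rcons s (last 0 s)) && (1 < m.+1) &&
   (nth 0 (rcons s (last 0 s)) (m.+1 - 2) == last 0 (rcons s (last 0 s))) &&
   (x < last 0 (rcons s (last 0 s)))) && (last 0 s < m.+1) =
  ((1 < m.+1) && ((m < 2) || ~~ T (m - 2))) && (good p110 T s && (x < last 0 s)).
Proof.
move=> Hs; have Hsz := size_allseqs _ _ Hs; have Hl := last_allseqs _ _ Hs.
rewrite !last_rcons Hl andbT.
case: (posnP m) => Hm0; first by rewrite Hm0 /= !andbF.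
rewrite -Hsz nth_rcons_last ?Hsz // eqxx andbT.
have -> : 1 < m.+1 by lia.
have [Hm|Hm] := ltnP m 2.
  rewrite (good_small _ _ (rcons s (last 0 s))) ?(good_small _ _ s) ?size_rcons ?Hsz; try lia. rewrite /= ?Hm.
rewrite good_rcons; [ | exact: p110_rcons | by rewrite Hsz ].
have H2 : 1 < size s by rewrite Hsz.
rewrite p110_last // Hsz ltnn andbF.
by case: (T (m-2)); case: (good p110 T s); rewrite /= ?andbT ?andbF.
Qed.

Lemma main_inv m :
  (forall T (f : nat -> bool),
     count (fun s => good p110 T s && f (last 0 s)) (allseqs m) =
     count (fun s => good p100 T s && f (last 0 s)) (allseqs m)) /\
  (forall T x,
     count (fun s => good p100 T s && (2 <= m) && (last 0 s == x) && (x < nth 0 s (m - 2))) (allseqs m) =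
     count (fun s => good p110 T s && (2 <= m) && (nth 0 s (m - 2) == last 0 s) && (x < last 0 s)) (allseqs m)).
Proof.
elim: m => [|m [J I]]; first by split.
have K : forall T y, count (fun s => good p110 T (rcons s y)) (allseqs m) =
                     count (fun s => good p100 T (rcons s y)) (allseqs m).
  move=> T y; have [Hm|Hm] := ltnP m 2.
    by apply: eq_in_count => s /size_allseqs Hs; rewrite !good_small // size_rcons Hs.
  have E110 : {in allseqs m, forall s, good p110 T (rcons s y) =
      good p110 T s && (((nth 0 s (m-2) == last 0 s) && (y < last 0 s)) == T (m-2))}.
    move=> s /size_allseqs Hs; rewrite good_rcons; [ | exact: p110_rcons | by rewrite Hs ].
    by rewrite p110_last Hs.
  have E100 : {in allseqs m, forall s, good p100 T (rcons s y) =
      good p100 T s && (((last 0 s < nth 0 s (m-2)) && (last 0 s == y)) == T (m-2))}.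
    move=> s /size_allseqs Hs; rewrite good_rcons; [ | exact: p100_rcons | by rewrite Hs ].
    by rewrite p100_last Hs.
  rewrite (eq_in_count E110) (eq_in_count E100).
  have HI := I T y; rewrite Hm in HI.
  case Ht: (T (m-2)).
    transitivity (count (fun s => good p110 T s && true && (nth 0 s (m - 2) == last 0 s) && (y < last 0 s)) (allseqs m)).
      by apply: eq_count => s; rewrite eqb_id andbT andbA.
    rewrite -HI; apply: eq_count => s; rewrite eqb_id andbT -andbA; congr (_ && _).
    by case: eqP => [->|_]; rewrite /= ?andbT ?andbF.
  have S1 : count (good p110 T) (allseqs m) =
    count (fun s => good p110 T s && ((nth 0 s (m - 2) == last 0 s) && (y < last 0 s))) (allseqs m) +
    count (fun s => good p110 T s && ~~ ((nth 0 s (m - 2) == last 0 s) && (y < last 0 s))) (allseqs m).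
    exact: count_split.
  have S2 : count (good p100 T) (allseqs m) =
    count (fun s => good p100 T s && ((last 0 s < nth 0 s (m - 2)) && (last 0 s == y))) (allseqs m) +
    count (fun s => good p100 T s && ~~ ((last 0 s < nth 0 s (m - 2)) && (last 0 s == y))) (allseqs m).
    exact: count_split.
  have J0 : count (good p110 T) (allseqs m) = count (good p100 T) (allseqs m).
    rewrite -(eq_count (fun s => andbT (good p110 T s))) -(eq_count (fun s => andbT (good p100 T s))).
    exact: J T predT.
  have E1 : count (fun s => good p110 T s && ((nth 0 s (m - 2) == last 0 s) && (y < last 0 s))) (allseqs m)
          = count (fun s => good p100 T s && ((last 0 s < nth 0 s (m - 2)) && (last 0 s == y))) (allseqs m).
    transitivity (count (fun s => good p110 T s && true && (nth 0 s (m - 2) == last 0 s) && (y < last 0 s)) (allseqs m)).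
      by apply: eq_count => s; rewrite andbT andbA.
    rewrite -HI; apply: eq_count => s; rewrite andbT -andbA; congr (_ && _).
    by case: eqP => [->|_]; rewrite /= ?andbT ?andbF.
  rewrite (eq_count (fun s => congr1 (andb (good p110 T s)) (eqbF_neg ((nth 0 s (m - 2) == last 0 s) && (y < last 0 s))))).
  rewrite (eq_count (fun s => congr1 (andb (good p100 T s)) (eqbF_neg ((last 0 s < nth 0 s (m - 2)) && (last 0 s == y))))).
  lia.
split.
  move=> T f; rewrite !count_allseqsS; apply: eq_bigr => y _.
  have H1 : forall p, count (fun s : seq nat => good p T (rcons s (y : nat)) && f (last 0 (rcons s (y : nat)))) (allseqs m)
      = f y * count (fun s : seq nat => good p T (rcons s (y : nat))) (allseqs m).
    move=> p; rewrite -(count_const_l _ _ (f y)) ; apply: eq_count => s; by rewrite last_rcons andbC.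
  by rewrite !H1 K.
move=> T x; rewrite !count_allseqsS.
rewrite (@sum_pick_rcons _ _ (fun s => good p100 T s && (1 < m.+1) && (last 0 s == x) && (x < nth 0 s (m.+1 - 2))) (fun _ => x)); last first.
  by move=> s y _ /andP[/andP[_ /eqP]]; rewrite last_rcons.
rewrite (@sum_pick_rcons _ _ (fun s => good p110 T s && (1 < m.+1) && (nth 0 s (m.+1 - 2) == last 0 s) && (x < last 0 s)) (fun s => last 0 s)); last first.
  move=> s y /size_allseqs Hs /andP[/andP[/andP[_ H2] /eqP E] _].
  rewrite last_rcons in E; rewrite -E -Hs nth_rcons_last // Hs; lia.
rewrite (eq_in_count (pt100 m T x)) (eq_in_count (pt110 m T x)) !count_const_l.
congr (_ * _); symmetry; exact: (J T (fun v => x < v)).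
Qed.

Lemma uniq_allseqs m : uniq (allseqs m).
Proof.
elim: m => [|m IH] //; rewrite allseqsS.
apply: allpairs_uniq => //; first exact: iota_uniq.
by move=> [y1 s1] [y2 s2] _ _ /= /rcons_inj [-> ->].
Qed.

Lemma map_val_pmap n (s : seq nat) : all (fun x => x < n) s ->
  map val (pmap (insub : nat -> option 'I_n) s) = s.
Proof.
elim: s => //= a s IH /andP[Ha Hs].
case: insubP => [u _ Hu|]; last by rewrite Ha.
by rewrite /= Hu IH.
Qed.

Lemma card_link n (P : pred (seq nat)) :
  #|[set e in invseqs n | P (map val e)]| = count P (allseqs n).
Proof.
have -> : #|[set e in invseqs n | P (map val e)]| =
    count (fun e : n.-tuple 'I_n => P (map val e)) (enum (invseqs n)).
  rewrite cardE -size_filter; apply: perm_size; apply: uniq_perm.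
  - exact: enum_uniq.
  - exact: filter_uniq (enum_uniq _).
  - by move=> e; rewrite mem_enum mem_filter mem_enum !inE andbC.
transitivity (count P (map (fun e : n.-tuple 'I_n => map val e) (enum (invseqs n)))).
  by rewrite count_map.
have Hp : perm_eq (map (fun e : n.-tuple 'I_n => map val e) (enum (invseqs n))) (allseqs n).
  apply: uniq_perm; last first.
  - move=> s; rewrite mem_allseqs; apply/mapP/andP => [[e He ->]|[/eqP Hs Hall]].
      rewrite mem_enum inE in He; split; first by rewrite size_map size_tuple.
      apply/allP => j; rewrite mem_iota add0n => /andP[_ Hj].
      by move/forallP: He => /(_ (Ordinal Hj)).
    have Ha : all (fun x => x < n) s.
      apply/allP => x /(nthP 0) [j Hj <-].
      have /(allP Hall) : j \in iota 0 n by rewrite mem_iota; lia.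
      move=> /= ?; lia.
    have Hsz : size (pmap (insub : nat -> option 'I_n) s) == n.
      by rewrite -(size_map val) map_val_pmap // Hs.
    exists (Tuple Hsz); last first; first by rewrite map_val_pmap.
    rewrite mem_enum inE; apply/forallP => j.
    rewrite /ent /= map_val_pmap //.
    by apply: (allP Hall); rewrite mem_iota add0n ltn_ord.
  - exact: uniq_allseqs.
  - rewrite map_inj_uniq ?enum_uniq // => e1 e2 /(inj_map val_inj) E.
    exact: val_inj.
by move/permP: Hp => ->.
Qed.

Definition Tn n (T : {set 'I_n}) : nat -> bool :=
  fun j => [exists i : 'I_n, (i \in T) && (val i == j)].
Arguments Tn {n}.

Lemma Tn_ord n (T : {set 'I_n}) (i : 'I_n) : Tn T i = (i \in T).
Proof.
apply/existsP/idP => [[k /andP[Hk /eqP E]]|H]; last by exists i; rewrite H eqxx.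
by have <- : k = i by apply: val_inj.
Qed.

Lemma em_good (p : seq nat -> nat -> bool) n (T : {set 'I_n}) (s : seq nat) :
  size s = n -> (forall j, p s j -> j.+2 < size s) ->
  [forall i : 'I_n, p s i == (i \in T)] =
  good p (Tn T) s && [forall i : 'I_n, (n <= i.+2) ==> (i \notin T)].
Proof.
move=> Hs Hp; apply/forallP/andP => [H|[Hg /forallP HR] i].
  split.
    apply/allP => j; rewrite mem_iota add0n Hs => /andP[_ Hj].
    have Hjn : j < n by lia.
    by have := H (Ordinal Hjn); rewrite -Tn_ord.
  apply/forallP => i; apply/implyP => Hi.
  have := H i; case: (p s i) / idP => [/Hp|_]; first by rewrite Hs; lia.
  by rewrite eq_sym eqbF_neg.
case: (ltnP i.+2 n) => Hi.
  have := allP Hg i; rewrite mem_iota add0n Hs Tn_ord => -> //; lia.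
have := HR i; rewrite Hi /= => HiT; rewrite (negbTE HiT).
case: (p s i) / idP => [/Hp|] //; rewrite Hs; lia.
Qed.

Lemma em110E n (e : n.-tuple 'I_n) (T : {set 'I_n}) :
  (Em110 e == T) = [forall i : 'I_n, p110 (map val e) i == (i \in T)].
Proof.
apply/eqP/forallP => [<- i|H]; first by rewrite inE /p110 size_map size_tuple.
apply/setP => i; rewrite inE; have := H i; rewrite /p110 size_map size_tuple.
by move/eqP.
Qed.

Lemma em100E n (e : n.-tuple 'I_n) (T : {set 'I_n}) :
  (Em100 e == T) = [forall i : 'I_n, p100 (map val e) i == (i \in T)].
Proof.
apply/eqP/forallP => [<- i|H]; first by rewrite inE /p100 size_map size_tuple.
apply/setP => i; rewrite inE; have := H i; rewrite /p100 size_map size_tuple.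
by move/eqP.
Qed.

Theorem mainTheorem12 (n : nat) (T : {set 'I_n}) :
  #|[set e in invseqs n | Em110 e == T]| = #|[set e in invseqs n | Em100 e == T]|.
Proof.
set R := [forall i : 'I_n, (n <= i.+2) ==> (i \notin T)].
have -> : #|[set e in invseqs n | Em110 e == T]| =
          #|[set e in invseqs n | (fun s => good p110 (Tn T) s && R) (map val e)]|.
  apply: eq_card => e; rewrite !inE em110E em_good ?size_map ?size_tuple //.
  by move=> j; rewrite /p110 size_map size_tuple => /andP[/andP[]].
have -> : #|[set e in invseqs n | Em100 e == T]| =
          #|[set e in invseqs n | (fun s => good p100 (Tn T) s && R) (map val e)]|.
  apply: eq_card => e; rewrite !inE em100E em_good ?size_map ?size_tuple //.
  by move=> j; rewrite /p100 size_map size_tuple => /andP[/andP[]].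
rewrite (card_link n (fun s => good p110 (Tn T) s && R)) (card_link n (fun s => good p100 (Tn T) s && R)).
exact: ((main_inv n).1 (Tn T) (fun _ => R)).
Qed.
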